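(* Let $G=(V,E)$ be a graph with maximum (undirected) degree $\Delta$ and arboricity $\alpha$, let $\mu$ be an orientation of its edges with out-degree at most $2\alpha$, let $h\le\log\alpha$, and consider Procedure Oriented Edge-Coloring$(G,\mu,h)$. For every $0\le i\le h$, the maximum (undirected) degree $\Delta^{(i)}$ of any graph $G^{(i)}$ computed after $i$ levels of recursion satisfies $\Delta^{(i)}\le\frac{\Delta}{2^i}+2$.
   Context: Logarithms are base 2. The arboricity of $G$ is $\max_{S\subseteq V,|S|\ge2}\lceil |E(G[S])|/(|S|-1)\rceil$. An oriented degree-splitting of $(H,\mu)$ with discrepancy $\kappa$ is a partition $(E_1,E_2)$ of $E(H)$ such that for every vertex $v$, the numbers of incoming edges of $v$ in $E_1$ and in $E_2$ differ by at most $\kappa$, and likewise for outgoing edges. Procedure Oriented Edge-Coloring$(H,\mu,h)$: if $h=0$, return a proper $(\Delta(H)+1)$-edge-coloring of $H$ from a base-case subroutine; otherwise compute an oriented degree-splitting $(E_1,E_2)$ of $(H,\mu)$ with discrepancy at most 1, recursively call Oriented Edge-Coloring$(H_1,\mu,h-1)$ and Oriented Edge-Coloring$(H_2,\mu,h-1)$ on $H_1=(V,E_1)$, $H_2=(V,E_2)$ (with the orientation induced by $\mu$), and merge the colorings using disjoint palettes. $G^{(0)}=G$, and a graph computed after $i$ levels of recursion is any $H_1$ or $H_2$ produced from a graph computed after $i-1$ levels. *)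

(* Defs.v *)
From HB Require Import structures.
From mathcomp Require Import all_boot all_order all_algebra.
Set Implicit Arguments. Unset Strict Implicit. Unset Printing Implicit Defensive.

Section Defs.
Variable V : finType.

Definition simple_graph (e : rel V) : Prop := symmetric e /\ irreflexive e.

Definition udeg (e : rel V) (v : V) : nat := #|[set u | e v u]|.
Definition max_deg (e : rel V) : nat := \max_(v : V) udeg e v.

(* |E(G[S])| : number of (unordered) edges with both ends in S *)
Definition edges_in (e : rel V) (S : {set V}) : nat :=
  #|[set p : V * V | [&& p.1 \in S, p.2 \in S & e p.1 p.2]]| %/ 2.

Definition ceil_div (a b : nat) : nat := (a + b.-1) %/ b.

Definition arboricity (e : rel V) : nat :=
  \max_(S : {set V} | 1 < #|S|) ceil_div (edges_in e S) (#|S| - 1).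

(* mu is an orientation of the edges of e: every edge gets exactly one direction,
   and only edges get directions. mu u v means the edge {u,v} is oriented u -> v. *)
Definition is_orientation (e mu : rel V) : Prop :=
  (forall u v, mu u v -> e u v) /\ (forall u v, e u v -> mu u v (+) mu v u).

Definition outdeg_mu (mu : rel V) (v : V) : nat := #|[set u | mu v u]|.

(* An oriented (sub)graph is a set of arcs (u, v), meaning edge {u,v} oriented u -> v. *)
Definition arcs_of (mu : rel V) : {set V * V} := [set p | mu p.1 p.2].

Definition indeg (F : {set V * V}) (v : V) : nat := #|[set p in F | p.2 == v]|.
Definition outdeg (F : {set V * V}) (v : V) : nat := #|[set p in F | p.1 == v]|.
Definition deg (F : {set V * V}) (v : V) : nat :=
  #|[set p in F | (p.1 == v) || (p.2 == v)]|.
Definition max_deg_arcs (F : {set V * V}) : nat := \max_(v : V) deg F v.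

Definition close_by (k m n : nat) : bool := (m <= n + k) && (n <= m + k).

Definition oriented_splitting (kappa : nat) (F F1 F2 : {set V * V}) : Prop :=
  [/\ F1 :|: F2 = F, F1 :&: F2 = set0,
      forall v, close_by kappa (indeg F1 v) (indeg F2 v)
    & forall v, close_by kappa (outdeg F1 v) (outdeg F2 v)].

(* computed mu i H : H is a graph computed after i levels of recursion of
   Oriented Edge-Coloring(G, mu, h), for any choice of discrepancy-1 splittings *)
Inductive computed (mu : rel V) : nat -> {set V * V} -> Prop :=
| computed0 : computed mu 0 (arcs_of mu)
| computed_l i F F1 F2 :
    computed mu i F -> oriented_splitting 1 F F1 F2 -> computed mu i.+1 F1
| computed_r i F F1 F2 :
    computed mu i F -> oriented_splitting 1 F F1 F2 -> computed mu i.+1 F2.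

End Defs.

(* Main.v *)
Require Import Defs.
From HB Require Import structures.
From mathcomp Require Import all_boot all_order all_algebra.
From mathcomp Require Import zify.
Import GRing.Theory Num.Theory.

Lemma cnt_split (V : finType) (F F1 F2 : {set V * V}) (P : pred (V * V)) :
  F1 :|: F2 = F -> F1 :&: F2 = set0 ->
  #|[set p in F | P p]| = (#|[set p in F1 | P p]| + #|[set p in F2 | P p]|)%N.
Proof.
move=> HU HI.
have -> : [set p in F | P p] = [set p in F1 | P p] :|: [set p in F2 | P p].
  by apply/setP=> p; rewrite !inE -HU inE andb_orl.
rewrite cardsU.
have -> : [set p in F1 | P p] :&: [set p in F2 | P p] = set0.
  apply/setP=> p; rewrite !inE; apply/negbTE/negP => /andP[/andP[a _] /andP[b _]].
  by move/setP: HI => /(_ p); rewrite !inE a b.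
by rewrite cards0 subn0.
Qed.

Lemma deg_le (V : finType) (F : {set V * V}) v :
  (deg F v <= indeg F v + outdeg F v)%N.
Proof.
rewrite /deg /indeg /outdeg addnC.
have -> : [set p in F | (p.1 == v) || (p.2 == v)] =
  [set p in F | p.1 == v] :|: [set p in F | p.2 == v].
  by apply/setP=> p; rewrite !inE andb_orr.
exact: leq_card_setU.
Qed.

Lemma base_le (V : finType) (e mu : rel V) v :
  simple_graph e -> is_orientation e mu ->
  (indeg (arcs_of mu) v + outdeg (arcs_of mu) v <= udeg e v)%N.
Proof.
move=> [Hs Hirr] [Hme Hx].
have h1 : (indeg (arcs_of mu) v <= #|[set u | mu u v]|)%N.
  rewrite -(card_imset _ (f := fun u => (u, v))); last by move=> a b [].
  apply: subset_leq_card; apply/subsetP => -[a b]; rewrite !inE /= => /andP[m /eqP E].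
  subst b; apply/imsetP; exists a => //; by rewrite inE.
have h2 : (outdeg (arcs_of mu) v <= #|[set u | mu v u]|)%N.
  rewrite -(card_imset _ (f := fun u => (v, u))); last by move=> a b [].
  apply: subset_leq_card; apply/subsetP => -[a b]; rewrite !inE /= => /andP[m /eqP E].
  subst a; apply/imsetP; exists b => //; by rewrite inE.
apply: leq_trans (leq_add h1 h2) _.
have -> : (#|[set u | mu u v]| + #|[set u | mu v u]| =
           #|[set u | mu u v] :|: [set u | mu v u]|)%N.
  rewrite cardsU.
  have -> : [set u | mu u v] :&: [set u | mu v u] = set0.
    apply/setP=> u; rewrite !inE; apply/negbTE/negP => /andP[a b].
    have := Hx u v (Hme _ _ a); by rewrite a b.
  by rewrite cards0 subn0.
apply: subset_leq_card; apply/subsetP => u; rewrite !inE => /orP[a|a].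
  by rewrite Hs; apply: Hme.
by apply: Hme.
Qed.

Lemma inv (V : finType) (e mu : rel V) i H :
  simple_graph e -> is_orientation e mu -> computed mu i H ->
  forall v, ((indeg H v + outdeg H v) * 2 ^ i <= max_deg e + 2 * 2 ^ i)%N.
Proof.
move=> Hg Ho; elim => [|j F F1 F2 _ IH [HU HI Hin Hout]|j F F1 F2 _ IH [HU HI Hin Hout]] v.
- rewrite expn0 !muln1.
apply: leq_trans (@base_le V e mu v Hg Ho) _.
  apply: leq_trans (leq_addr _ _); rewrite /max_deg.
  exact: (leq_bigmax (F := udeg e) v).
- have := IH v; have := Hin v; have := Hout v.
  rewrite /indeg /outdeg (@cnt_split _ F F1 F2 _ HU HI) (@cnt_split _ F F1 F2 _ HU HI) /close_by expnS.
  move=> /andP[a b] /andP[c d] h.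
  set x := #|_| in a b h *; set y := #|_| in a b h *.
  set z := #|_| in c d h *; set w := #|_| in c d h *.
  nia.
- have := IH v; have := Hin v; have := Hout v.
  rewrite /indeg /outdeg (@cnt_split _ F F1 F2 _ HU HI) (@cnt_split _ F F1 F2 _ HU HI) /close_by expnS.
  move=> /andP[a b] /andP[c d] h.
  set x := #|_| in a b h *; set y := #|_| in a b h *.
  set z := #|_| in c d h *; set w := #|_| in c d h *.
  nia.
Qed.

Local Open Scope ring_scope.

Theorem corollary4p9 (V : finType) (e mu : rel V) (Delta alpha h : nat) :
  simple_graph e ->
  Delta = max_deg e ->
  alpha = arboricity e ->
  is_orientation e mu ->
  (forall v, (outdeg_mu mu v <= 2 * alpha)%N) ->
  (2 ^ h <= alpha)%N ->
  forall (i : nat) (H : {set V * V}), (i <= h)%N -> computed mu i H ->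
    (max_deg_arcs H)%:R <= (Delta%:R / (2 ^ i)%:R : rat) + 2.
Proof.
move=> Hg -> _ Ho _ _ i H _ Hc.
have key : ((max_deg_arcs H) * 2 ^ i <= max_deg e + 2 * 2 ^ i)%N.
  rewrite /max_deg_arcs; elim/big_ind: _ => //.
  - move=> x y hx hy; nia.
  - move=> v _; apply: leq_trans (@inv V e mu i H Hg Ho Hc v).
    by rewrite leq_mul2r deg_le orbT.
have p : 0 < (2 ^ i)%:R :> rat by rewrite ltr0n expn_gt0.
rewrite -(ler_pM2r p) mulrDl divfK.
rewrite -!natrM -natrD ler_nat.
move: key; lia.
by rewrite pnatr_eq0 expn_eq0.
Qed.
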